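(* Let $\mathcal V$ be an operator space and $\mathcal D'\subseteq\mathcal D$ an inclusion of noncommutative domains in $\mathcal V_{\rm nc}$ ($\mathcal D'_n\subseteq\mathcal D_n$ for all $n$). Assume (1) $M:=\sup_{n\in\mathbb N}\sup_{x\in\mathcal D'_n}\|x\|<+\infty$ and (2) $m:=\inf_{n\in\mathbb N}\inf\{\|x-w\|\colon x\in\mathcal D'_n,\ w\in\mathcal V^{n\times n}\setminus\mathcal D_n\}>0$. Then there exists a constant $k\in[0,1)$ such that $k\,\tilde\delta_{\mathcal D'}(a,c)\ge\tilde\delta_{\mathcal D}(a,c)$ for all $n$ and all $a,c\in\mathcal D'_n$.
   Context: A noncommutative domain is a family $\mathcal D=(\mathcal D_n)$ of open sets $\mathcal D_n\subseteq\mathcal V^{n\times n}$ (with the operator-space norms) closed under direct sums. For $a\in\mathcal D_n,c\in\mathcal D_m,b\in\mathcal V^{n\times m}$, $\delta_{\mathcal D}(a,c)(b)=\big[\sup\{t\in[0,+\infty]\colon\begin{bmatrix}a&sb\\0&c\end{bmatrix}\in\mathcal D_{n+m}\ \forall s\in[0,t]\}\big]^{-1}$ ($1/0=+\infty,1/\infty=0$), and $\tilde\delta_{\mathcal D}(a,c)=\delta_{\mathcal D}(a,c)(a-c)$ for $a,c\in\mathcal D_n$. *)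

(* Defs.v *)
From mathcomp Require Import all_boot all_order all_algebra.
From mathcomp Require Import complex.
From mathcomp Require Import all_classical all_reals ereal.
Set Implicit Arguments. Unset Strict Implicit. Unset Printing Implicit Defensive.
Import Order.TTheory GRing.Theory Num.Theory.
Local Open Scope ring_scope.
Local Open Scope classical_set_scope.

Section OpSpace.
Variable R : realType.
Local Notation C := (R[i]).

Definition cabs (z : C) : R := Normc.normc z.

Definition vnorm n (v : 'cV[C]_n) : R := Num.sqrt (\sum_(i < n) cabs (v i 0) ^+ 2).

Definition opnorm p n (A : 'M[C]_(p, n)) : R :=
  sup [set vnorm (A *m v) | v in [set v : 'cV[C]_n | vnorm v <= 1]].

Variable V : lmodType C.

Definition mxscale n m (z : C) (x : 'M[V]_(n, m)) : 'M[V]_(n, m) := map_mx ( *:%R z) x.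

Definition scmx p n m q (al : 'M[C]_(p, n)) (x : 'M[V]_(n, m)) (be : 'M[C]_(m, q))
  : 'M[V]_(p, q) :=
  \matrix_(i, j) \sum_(k < n) \sum_(l < m) (al i k * be l j) *: x k l.

(* Ruan's axioms for a (rectangular) matrix-norm family on V:
   each nrm n m is a norm on V^{n x m}, plus
   (R1) ||x (+) y|| = max(||x||,||y||), (R2) ||alpha x beta|| <= ||alpha|| ||x|| ||beta||. *)
Record is_operator_space (nrm : forall n m, 'M[V]_(n, m) -> R) : Prop := {
  os_ge0 : forall n m (x : 'M[V]_(n, m)), 0 <= nrm n m x;
  os_eq0 : forall n m (x : 'M[V]_(n, m)), nrm n m x = 0 -> x = 0;
  os_scale : forall n m (z : C) (x : 'M[V]_(n, m)), nrm n m (mxscale z x) = cabs z * nrm n m x;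
  os_triangle : forall n m (x y : 'M[V]_(n, m)), nrm n m (x + y) <= nrm n m x + nrm n m y;
  os_R1 : forall n m p q (x : 'M[V]_(n, m)) (y : 'M[V]_(p, q)),
      nrm (n + p)%N (m + q)%N (block_mx x 0 0 y) = Num.max (nrm n m x) (nrm p q y);
  os_R2 : forall p n m q (al : 'M[C]_(p, n)) (x : 'M[V]_(n, m)) (be : 'M[C]_(m, q)),
      nrm p q (scmx al x be) <= opnorm al * nrm n m x * opnorm be
}.

Definition mx_open (nrm : forall n m, 'M[V]_(n, m) -> R) n (A : set 'M[V]_n) : Prop :=
  forall x, A x -> exists2 e : R, 0 < e & forall y, nrm n n (y - x) < e -> A y.

Definition nc_domain (nrm : forall n m, 'M[V]_(n, m) -> R) (D : forall n, set 'M[V]_n) : Prop :=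
  (forall n, (0 < n)%N -> mx_open nrm (D n)) /\
  (forall n m (a : 'M[V]_n) (c : 'M[V]_m), (0 < n)%N -> (0 < m)%N ->
     D n a -> D m c -> D (n + m)%N (block_mx a 0 0 c)).

End OpSpace.

Section Delta.
Variable R : realType.
Variable V : lmodType (R[i]).
Local Open Scope ereal_scope.

(* 1/t on [0,+oo], with 1/0 = +oo and 1/+oo = 0 *)
Definition einv (t : \bar R) : \bar R :=
  match t with
  | +oo => 0
  | -oo => 0
  | EFin r => if r == 0%R then +oo else (r^-1)%:E
  end.

Definition delta (D : forall n, set 'M[V]_n) n m (a : 'M[V]_n) (c : 'M[V]_m)
    (b : 'M[V]_(n, m)) : \bar R :=
  einv (ereal_sup [set t : \bar R | 0 <= t /\
     forall s : R, (0 <= s)%R -> s%:E <= t ->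
       D (n + m)%N (block_mx a (mxscale (s%:C)%C b) 0 c)]).

Definition deltat (D : forall n, set 'M[V]_n) n (a c : 'M[V]_n) : \bar R :=
  delta D a c (a - c).

End Delta.

(* Main.v *)
Require Import Defs.
From mathcomp Require Import all_boot all_order all_algebra.
From mathcomp Require Import complex.
From mathcomp Require Import all_classical all_reals ereal.
From mathcomp Require Import ring lra.
Set Implicit Arguments. Unset Strict Implicit. Unset Printing Implicit Defensive.
Import Order.TTheory GRing.Theory Num.Theory.
Local Open Scope ring_scope.
Local Open Scope classical_set_scope.

Section Aux.
Variable R : realType.
Local Notation C := (R[i]).
Variable V : lmodType C.

Lemma cabs_real (r : R) : cabs (r%:C)%C = `|r|.
Proof. by rewrite /cabs /Normc.normc /= expr0n /= addr0 sqrtr_sqr. Qed.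

Lemma pick2 n m (y : 'M[V]_(n, m)) i j :
  \sum_(k < n) \sum_(l < m) ((1%:M : 'M[C]_n) i k * (1%:M : 'M[C]_m) l j) *: y k l = y i j.
Proof.
rewrite (bigD1 i) //= [X in _ + X]big1 => [|k ki]; last first.
  by apply: big1 => l _; rewrite mxE eq_sym (negbTE ki) mul0r scale0r.
rewrite addr0 (bigD1 j) //= [X in _ + X]big1 => [|l lj]; last first.
  by rewrite [X in _ * X]mxE (negbTE lj) mulr0 scale0r.
by rewrite !mxE !eqxx mulr1 scale1r addr0.
Qed.

Lemma scmx_ur n (y : 'M[V]_n) :
  scmx (col_mx (1%:M : 'M[C]_n) (0 : 'M[C]_n)) y (row_mx (0 : 'M[C]_n) (1%:M : 'M[C]_n)) = block_mx 0 y 0 0.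
Proof.
apply/matrixP => i j; rewrite mxE.
have <- := fintype.splitK i; have <- := fintype.splitK j; case: (fintype.split i) => i'; case: (fintype.split j) => j' /=.
- rewrite block_mxEul mxE; apply: big1 => k _; apply: big1 => l _.
  by rewrite col_mxEu row_mxEl !mxE mulr0 scale0r.
- rewrite block_mxEur -[RHS](pick2 y i' j'); apply: eq_bigr => k _; apply: eq_bigr => l _.
  by rewrite col_mxEu row_mxEr.
- rewrite block_mxEdl mxE; apply: big1 => k _; apply: big1 => l _.
  by rewrite col_mxEd mxE mul0r scale0r.
- rewrite block_mxEdr mxE; apply: big1 => k _; apply: big1 => l _.
  by rewrite col_mxEd mxE mul0r scale0r.
Qed.

Lemma scmx_compress n (a y c : 'M[V]_n) :
  scmx (row_mx (1%:M : 'M[C]_n) (0 : 'M[C]_n)) (block_mx a y 0 c) (col_mx (0 : 'M[C]_n) (1%:M : 'M[C]_n)) = y.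
Proof.
apply/matrixP => i j; rewrite mxE big_split_ord /=.
rewrite [X in _ + X = _]big1 ?addr0 => [|k _]; last first.
  by apply: big1 => l _; rewrite row_mxEr mxE mul0r scale0r.
rewrite -[RHS](pick2 y i j); apply: eq_bigr => k _.
rewrite big_split_ord /= [X in X + _ = _]big1 ?add0r => [|l _]; last first.
  by rewrite row_mxEl col_mxEu [X in _ * X]mxE mulr0 scale0r.
by apply: eq_bigr => l _; rewrite row_mxEl col_mxEd block_mxEur.
Qed.


Definition ssq n (v : 'cV[C]_n) : R := \sum_(i < n) cabs (v i 0) ^+ 2.

Lemma ssq_ge0 n (v : 'cV[C]_n) : 0 <= ssq v.
Proof. by apply: sumr_ge0 => i _; rewrite sqr_ge0. Qed.

Lemma ssq0 n : ssq (0 : 'cV[C]_n) = 0.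
Proof. by apply: big1 => i _; rewrite mxE /cabs Normc.normc0 expr0n. Qed.

Lemma ssq_col n m (u : 'cV[C]_n) (w : 'cV[C]_m) : ssq (col_mx u w) = ssq u + ssq w.
Proof. by rewrite /ssq big_split_ord /=; congr (_ + _); apply: eq_bigr => i _; rewrite ?col_mxEu ?col_mxEd. Qed.

Lemma vnorm0 n : vnorm (0 : 'cV[C]_n) = 0.
Proof. by rewrite /vnorm big1 ?sqrtr0 // => i _; rewrite mxE /cabs Normc.normc0 expr0n. Qed.

Lemma vnormE n (v : 'cV[C]_n) : vnorm v = Num.sqrt (ssq v).
Proof. by []. Qed.

Lemma opnorm_le1 p n (A : 'M[C]_(p, n)) :
  (forall v, ssq (A *m v) <= ssq v) -> 0 <= opnorm A /\ opnorm A <= 1.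
Proof.
move=> H.
have ub : ubound [set vnorm (A *m v) | v in [set v : 'cV[C]_n | vnorm v <= 1]] 1.
  move=> _ [v /= v1 <-]; apply: le_trans v1.
  by rewrite !vnormE ler_sqrt ?ssq_ge0 //; apply: H.
split; last by apply: ge_sup => //; exists 0, 0 => //=; rewrite ?mulmx0 vnorm0.

apply: (@le_trans _ _ (vnorm (A *m 0))); first by rewrite mulmx0 vnorm0.
apply: ub_le_sup; first by exists 1.
by exists 0 => //=; rewrite vnorm0.
Qed.

Lemma op_cu n : 0 <= opnorm (col_mx (1%:M : 'M[C]_n) (0 : 'M[C]_n)) /\ opnorm (col_mx (1%:M : 'M[C]_n) (0 : 'M[C]_n)) <= 1.
Proof. by apply: opnorm_le1 => v; rewrite mul_col_mx mul1mx mul0mx ssq_col ssq0 addr0. Qed.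

Lemma op_cd n : 0 <= opnorm (col_mx (0 : 'M[C]_n) (1%:M : 'M[C]_n)) /\ opnorm (col_mx (0 : 'M[C]_n) (1%:M : 'M[C]_n)) <= 1.
Proof. by apply: opnorm_le1 => v; rewrite mul_col_mx mul1mx mul0mx ssq_col ssq0 add0r. Qed.

Lemma op_rr n : 0 <= opnorm (row_mx (0 : 'M[C]_n) (1%:M : 'M[C]_n)) /\ opnorm (row_mx (0 : 'M[C]_n) (1%:M : 'M[C]_n)) <= 1.
Proof.
apply: opnorm_le1 => v; rewrite -(vsubmxK v) mul_row_col mul0mx add0r mul1mx ssq_col.
by rewrite lerDr ssq_ge0.
Qed.

Lemma op_rl n : 0 <= opnorm (row_mx (1%:M : 'M[C]_n) (0 : 'M[C]_n)) /\ opnorm (row_mx (1%:M : 'M[C]_n) (0 : 'M[C]_n)) <= 1.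
Proof.
apply: opnorm_le1 => v; rewrite -(vsubmxK v) mul_row_col mul0mx addr0 mul1mx ssq_col.
by rewrite lerDl ssq_ge0.
Qed.

Lemma mxscale_sub n m (z w : C) (b : 'M[V]_(n, m)) : mxscale z b - mxscale w b = mxscale (z - w) b.
Proof. by apply/matrixP => i j; rewrite !mxE scalerBl. Qed.

Lemma mxscale_0 n m (z : C) : mxscale z (0 : 'M[V]_(n, m)) = 0.
Proof. by apply/matrixP => i j; rewrite !mxE scaler0. Qed.

Lemma mxscale0 n m (b : 'M[V]_(n, m)) : mxscale 0 b = 0.
Proof. by apply/matrixP => i j; rewrite !mxE scale0r. Qed.

Lemma blk_sub n (a c : 'M[V]_n) (y z : 'M[V]_n) :
  block_mx a y 0 c - block_mx a z 0 c = block_mx 0 (y - z) 0 0.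
Proof. by rewrite opp_block_mx add_block_mx !subrr ?oppr0 ?addr0. Qed.

Unset Implicit Arguments.
Variable nrm : forall n m, 'M[V]_(n, m) -> R.
Hypothesis Hos : is_operator_space nrm.

Lemma R2_le1 p n m q (al : 'M[C]_(p, n)) (x : 'M[V]_(n, m)) (be : 'M[C]_(m, q)) :
  0 <= opnorm al /\ opnorm al <= 1 -> 0 <= opnorm be /\ opnorm be <= 1 ->
  nrm p q (scmx al x be) <= nrm n m x.
Proof.
move=> [a0 a1] [b0 b1]; apply: le_trans (os_R2 Hos al x be) _.
rewrite -[X in _ <= X]mulr1 ler_pM ?mulr_ge0 ?(os_ge0 Hos) //.
by rewrite -[X in _ <= X]mul1r ler_pM ?(os_ge0 Hos).
Qed.

Lemma nrm_ur n (y : 'M[V]_n) : nrm (n + n)%N (n + n)%N (block_mx 0 y 0 0) <= nrm n n y.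
Proof. by rewrite -scmx_ur; apply: R2_le1; [apply: op_cu | apply: op_rr]. Qed.

Lemma nrm_compress n (a y c : 'M[V]_n) : nrm n n y <= nrm (n + n)%N (n + n)%N (block_mx a y 0 c).
Proof. by rewrite -{1}(scmx_compress a y c); apply: R2_le1; [apply: op_rl | apply: op_cd]. Qed.

Lemma nrm_scale n m (s : R) (b : 'M[V]_(n, m)) : nrm n m (mxscale (s%:C)%C b) = `|s| * nrm n m b.
Proof. by rewrite (os_scale Hos) cabs_real. Qed.

End Aux.

Section Arith.
Variable R : realType.
Lemma ar_a (x y : R) : 0 < y -> x + y <= x -> False. Proof. move=> *; lra. Qed.
Lemma ar_b1 (r q : R) : q < r -> (r + q) / 2 < r. Proof. move=> *; lra. Qed.
Lemma ar_b2 (r q : R) : q < r -> (r + q) / 2 <= q -> False. Proof. move=> *; lra. Qed.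
Lemma ar_c1 (r d : R) : d <= r / 2 -> 0 < d -> 0 <= r - d. Proof. move=> *; lra. Qed.
Lemma ar_c2 (r d : R) : 0 < d -> r - d < r. Proof. move=> *; lra. Qed.
Lemma ar_d (r d s : R) : r <= s -> 0 < d -> 0 <= s - (r - d). Proof. move=> *; lra. Qed.
Lemma ar_e (r d s q : R) : s <= r + q -> d <= q / 2 -> 0 < q -> s - (r - d) < q * 2.
Proof. move=> *; lra. Qed.
Lemma ar_f (r M m b : R) : r * b <= M -> 0 < m -> r * ((M + m) * b) <= M * (r * b + m).
Proof. move=> *; nra. Qed.
End Arith.

Theorem proposition5p3 (R : realType) (V : lmodType (R[i]))
  (nrm : forall n m, 'M[V]_(n, m) -> R) (Hos : is_operator_space nrm)
  (D D' : forall n, set 'M[V]_n)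
  (HD : nc_domain nrm D) (HD' : nc_domain nrm D')
  (Hincl : forall n, (0 < n)%N -> D' n `<=` D n)
  (HM : (ereal_sup [set r : \bar R | exists n, (0 < n)%N /\
            exists x : 'M[V]_n, D' n x /\ r = (nrm n n x)%:E] < +oo)%E)
  (Hm : (0 < ereal_inf [set r : \bar R | exists n, (0 < n)%N /\
            exists (x w : 'M[V]_n), D' n x /\ ~ D n w /\ r = (nrm n n (x - w))%:E])%E) :
  exists k : R, 0 <= k < 1 /\
    forall n, (0 < n)%N -> forall a c : 'M[V]_n, D' n a -> D' n c ->
      (k%:E * deltat D' a c >= deltat D a c)%E.
Proof.
move: HM; set Ms := ereal_sup _ => HM.
have ubM : forall n, (0 < n)%N -> forall x, D' n x -> ((nrm n n x)%:E <= Ms)%E.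
  by move=> n n0 x Dx; apply: ereal_sup_ubound; exists n; split => //; exists x.
have [M0 [M0pos HM0]] : exists M0 : R, 0 < M0 /\
    forall n, (0 < n)%N -> forall x, D' n x -> nrm n n x <= M0.
  move: HM ubM; case: Ms => [r| |] // _ ubM.
  - exists (Num.max r 1); split; first by rewrite lt_max ltr01 orbT.
    move=> n n0 x Dx; have := ubM n n0 x Dx; rewrite lee_fin => h.
    by apply: le_trans h _; rewrite le_max lexx.
  - exists 1; split => // n n0 x Dx; have := ubM n n0 x Dx.
    by rewrite leeNy_eq.
move: Hm; set Is := ereal_inf _ => Hm.
have lbI : forall n, (0 < n)%N -> forall x w, D' n x -> ~ D n w ->
    (Is <= (nrm n n (x - w))%:E)%E.
  move=> n n0 x w Dx Dw; apply: ereal_inf_lbound; exists n; split => //.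
  by exists x, w.
have [m0 [m0pos Hm0]] : exists m0 : R, 0 < m0 /\
    forall n, (0 < n)%N -> forall x w, D' n x -> ~ D n w -> m0 <= nrm n n (x - w).
  move: Hm lbI; case: Is => [r| |] // r0 lbI.
  - exists r; split; first by rewrite -lte_fin.
    by move=> n n0 x w Dx Dw; rewrite -lee_fin; apply: lbI.
  - exists 1; split => // n n0 x w Dx Dw; have := lbI n n0 x w Dx Dw.
    by rewrite leye_eq.
pose m1 := m0 / 2.
have m1pos : 0 < m1 by rewrite divr_gt0.
pose k := M0 / (M0 + m1).
have kpos : 0 < k by rewrite divr_gt0 // addr_gt0.
exists k; split.
  rewrite (ltW kpos) /= ltr_pdivrMr ?addr_gt0 // mul1r.
  by rewrite ltrDl.
move=> n n0 a c Da Dc.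
have nn0 : (0 < n + n)%N by rewrite addn_gt0 n0.
rewrite /deltat /delta.
set b := a - c.
set SD := [set t : \bar R | _] ; set SD' := [set t : \bar R | _].
have [b0|bn0] := eqVneq b 0.
  have supy : forall (E : forall n, set 'M[V]_n), nc_domain nrm E -> E n a -> E n c ->
      ereal_sup [set t : \bar R | (0 <= t)%E /\ forall s : R, 0 <= s -> (s%:E <= t)%E ->
        E (n + n)%N (block_mx a (mxscale (s%:C)%C b) 0 c)] = +oo%E.
    move=> E HE Ea Ec; apply/eqP; rewrite eq_le leey /=; apply: ereal_sup_ubound.
    split => // s _ _; rewrite b0 mxscale_0; exact: HE.2.
  rewrite /SD /SD' (supy D) ?(supy D') //=; last by apply: Hincl.
  1: by apply: mule_ge0 => //; rewrite lee_fin ltW.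
  by apply: Hincl.
have bpos : 0 < nrm n n b.
  rewrite lt_def (os_ge0 Hos) andbT; apply/eqP => h; by move: bn0; rewrite (os_eq0 Hos h) eqxx.
set beta := nrm n n b.
have S'0 : SD' 0%E.
  split => // s s0; rewrite lee_fin => s0'.
  have -> : s = 0 by apply/eqP; rewrite eq_le s0' s0.
  by rewrite mxscale0; apply: HD'.2.
have F1 : forall s, 0 <= s -> (s%:E < ereal_sup SD')%E ->
    D' (n + n)%N (block_mx a (mxscale (s%:C)%C b) 0 c).
  move=> s s0 /ereal_sup_gt [y [y0 Hy] sy]; apply: Hy => //; exact: ltW.
have F2 : forall s, 0 <= s -> (s%:E < ereal_sup SD')%E -> s * beta <= M0.
  move=> s s0 sT; apply: (le_trans _ (HM0 _ nn0 _ (F1 s s0 sT))).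
  apply: (le_trans _ (nrm_compress _ _ _ Hos _ a _ c)).
  by rewrite (nrm_scale _ _ _ Hos) ger0_norm.
have F3 : forall s s', 0 <= s -> (s%:E < ereal_sup SD')%E -> 0 <= s' ->
    `|s' - s| * beta < m0 -> D (n + n)%N (block_mx a (mxscale (s'%:C)%C b) 0 c).
  move=> s s' s0 sT s'0 lt; apply: contrapT => nD.
  have := Hm0 _ nn0 _ _ (F1 s s0 sT) nD.
  rewrite blk_sub mxscale_sub -rmorphB => hh.
  have := le_trans hh (nrm_ur _ _ _ Hos _ _); rewrite (nrm_scale _ _ _ Hos) distrC.
  by rewrite leNgt lt.
have T'0 : (0 <= ereal_sup SD')%E by apply: ereal_sup_ubound.
move: T'0 F1 F2 F3; case: (ereal_sup SD') => [r| |] //; last first.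
  move=> _ _ F2 _; have := F2 (M0 / beta + 1).
  have h0 : 0 <= M0 / beta + 1 by rewrite addr_ge0 // divr_ge0 // ltW.
  move=> /(_ h0 (ltry _)).
  rewrite mulrDl mul1r divfK ?gt_eqF // => h; exfalso; exact: ar_a bpos h.
rewrite lee_fin => r0 F1 F2 F3.
have [r00|rpos] : r = 0 \/ 0 < r.
  by move: r0; rewrite le_eqVlt => /orP [/eqP <-|]; [left|right].
  by rewrite r00 /= eqxx gt0_muley ?lte_fin // leey.
have rM : r <= M0 / beta.
  rewrite leNgt; apply/negP => lt.
  have := F2 ((r + M0 / beta) / 2).
  rewrite divr_ge0 ?addr_ge0 ?divr_ge0 ?(ltW M0pos) ?(ltW bpos) ?(ltW rpos) //.
  rewrite lte_fin ar_b1 // => /(_ isT isT); rewrite -ler_pdivlMr //; exact: ar_b2.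
have rbound : r * beta <= M0 by rewrite -ler_pdivlMr.
pose q2 := m1 / beta.
have q2pos : 0 < q2 by rewrite divr_gt0.
pose t := r + q2.
have tpos : 0 < t by rewrite addr_gt0.
have StD : SD t%:E.
  split; first by rewrite lee_fin ltW.
  move=> s' s'0; rewrite lee_fin => s't.
  case: (ltP s' r) => [s'r | rs'].
    by apply: (Hincl _ nn0); apply: F1 => //; rewrite lte_fin.
  pose d := Num.min r q2 / 2.
  have d1 : d <= r / 2 by rewrite ler_pM2r // ge_min lexx.
  have d2 : d <= q2 / 2 by rewrite ler_pM2r // ge_min lexx orbT.
  have d3 : 0 < d by rewrite divr_gt0 // lt_min rpos q2pos.
  apply: (F3 (r - d) s') => //; first exact: ar_c1.
    by rewrite lte_fin; apply: ar_c2.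
  have hq : m0 / beta = q2 * 2 by rewrite /q2 /m1; field; rewrite gt_eqF.
  rewrite ger0_norm; last exact: ar_d.
  by rewrite -ltr_pdivlMr // hq; apply: ar_e.
have := ereal_sup_ubound StD.
case: (ereal_sup SD) => [u| |] //; last first.
  by move=> _ /=; rewrite (gt_eqF rpos) mule_ge0 // lee_fin ?invr_ge0 ltW.
rewrite lee_fin => tu.
have upos : 0 < u by apply: lt_le_trans tu.
rewrite /= (gt_eqF upos) (gt_eqF rpos) -EFinM lee_fin.
apply: (le_trans (y := t^-1)); first by rewrite lef_pV2 ?posrE.
rewrite ler_pdivlMr // mulrC ler_pdivrMr //.
have -> : k * t = M0 * (r * beta + m1) / ((M0 + m1) * beta).
  by rewrite /k /t /q2; field; rewrite ?gt_eqF ?addr_gt0.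
rewrite ler_pdivlMr ?mulr_gt0 ?addr_gt0 //.
exact: ar_f.
Qed.
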